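(* A normal mode transformation exists if and only if $\bm{\Omega}$ is positive definite.
   Context: Fix an integer $N\ge 1$, real numbers $v$ with $|v|<1$, $L>0$, $L_{\star}\ge 0$, an integer $M\ge 1$ and real coefficients $c_{1}=1,c_{2},\dots,c_{M}$. Let $F(k)=\sum_{i=1}^{M}(-1)^{i-1}c_{i}L_{\star}^{2i-2}k^{2i-1}$ and $k_{n}=n\pi/L$, and assume $F(k_{n})^{2}\neq v^{2}k_{n}^{2}$ for $n=1,\dots,N$. Put $u_{n}=\sqrt{|F(k_{n})^{2}-v^{2}k_{n}^{2}|}/k_{n}>0$, and $\varepsilon_{n}=1$ if $F(k_{n})^{2}-v^{2}k_{n}^{2}>0$, $\varepsilon_{n}=0$ otherwise. Define $N\times N$ matrices $\bm\sigma,\bm\rho,\bm\xi$ by $\sigma_{nn}=0$, $\sigma_{nm}=\dfrac{2iv\sqrt{nm}\,[1-(-1)^{n+m}]}{\pi\sqrt{u_{n}u_{m}}\,(m^{2}-n^{2})}$ for $n\neq m$, $\bm\rho=\mathrm{diag}(n u_{n}\varepsilon_{n})$, $\bm\xi=\mathrm{diag}(-n u_{n}(1-\varepsilon_{n}))$. With $\mathbf{I}$ the $N\times N$ identity, define the $2N\times 2N$ matrices $\bm{\Sigma}=\begin{pmatrix}\mathbf{I}&\mathbf{0}\\ \mathbf{0}&-\mathbf{I}\end{pmatrix}$, $\bm{\Gamma}=\begin{pmatrix}\mathbf{0}&\mathbf{I}\\ \mathbf{I}&\mathbf{0}\end{pmatrix}$, $\mathbf{R}=\bm{\Sigma}-\begin{pmatrix}\bm\sigma&\bm\sigma\\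 \bm\sigma&\bm\sigma\end{pmatrix}$, $\bm{\Omega}=\begin{pmatrix}\bm\rho&\bm\xi\\ \bm\xi&\bm\rho\end{pmatrix}$. Standing assumption: $\mathbf{R}$ is invertible. Let $\mathbf{D}=\mathbf{R}^{-1}\bm{\Omega}$. Here ${}^{*}$ denotes entrywise complex conjugation and ${}^{\mathrm{H}}$ the conjugate transpose. A normal mode transformation is a $2N\times2N$ matrix $\mathbf{T}$ such that (i) $\mathbf{T}^{\mathrm{H}}\mathbf{R}\mathbf{T}=\bm{\Sigma}$; (ii) $\mathbf{T}=\bm{\Gamma}\mathbf{T}^{*}\bm{\Gamma}$; (iii) $\mathbf{T}^{-1}\mathbf{D}\mathbf{T}=\mathrm{diag}(\mu_{1},\dots,\mu_{N},-\mu_{1},\dots,-\mu_{N})$ for some real numbers $\mu_{n}>0$, where $\mathbf{T}^{-1}=\bm{\Sigma}\mathbf{T}^{\mathrm{H}}\mathbf{R}$. *)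

(* Defs.v *)
From HB Require Import structures.
From mathcomp Require Import all_boot all_order all_algebra.
From mathcomp Require Import reals trigo.
From mathcomp Require Import complex.
Set Implicit Arguments. Unset Strict Implicit. Unset Printing Implicit Defensive.
Import Order.TTheory GRing.Theory Num.Theory.
Local Open Scope ring_scope.

Section Model.
Variable R : realType.
Local Notation C := (R[i]).

Definition toC (x : R) : C := Complex x 0.

Definition mxconj m n (A : 'M[C]_(m, n)) : 'M[C]_(m, n) := map_mx (@conjc R) A.
Definition mxH m n (A : 'M[C]_(m, n)) : 'M[C]_(n, m) := (mxconj A)^T.

Definition posdef n (A : 'M[C]_n) : Prop :=
  mxH A = A /\ forall x : 'cV[C]_n, x != 0 -> 0 < (mxH x *m A *m x) 0 0.

Definition Fk (Lstar : R) (M : nat) (c : nat -> R) (k : R) : R :=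
  \sum_(1 <= i < M.+1) (-1) ^+ (i - 1) * c i * Lstar ^+ (2 * i - 2) * k ^+ (2 * i - 1).

(** modes are indexed by i : 'I_N with n = i + 1 *)
Definition kn (L : R) (n : nat) : R := n%:R * pi / L.

Definition disc (v L Lstar : R) M c (n : nat) : R :=
  Fk Lstar M c (kn L n) ^+ 2 - v ^+ 2 * kn L n ^+ 2.

Definition un (v L Lstar : R) M c (n : nat) : R :=
  Num.sqrt `|disc v L Lstar M c n| / kn L n.

Definition epsn (v L Lstar : R) M c (n : nat) : R :=
  if 0 < disc v L Lstar M c n then 1 else 0.

Definition sigma_mx N (v L Lstar : R) M c : 'M[C]_N :=
  \matrix_(i < N, j < N)
    if i == j then 0 else
    let n := i.+1 in let m := j.+1 in
    'i * toC (2 * v * Num.sqrt ((n * m)%:R) * (1 - (-1) ^+ (n + m))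
         / (pi * Num.sqrt (un v L Lstar M c n * un v L Lstar M c m)
            * ((m ^ 2)%:R - (n ^ 2)%:R))).

Definition rho_mx N (v L Lstar : R) M c : 'M[C]_N :=
  diag_mx (\row_(i < N) toC (i.+1%:R * un v L Lstar M c i.+1 * epsn v L Lstar M c i.+1)).

Definition xi_mx N (v L Lstar : R) M c : 'M[C]_N :=
  diag_mx (\row_(i < N) toC (- (i.+1%:R * un v L Lstar M c i.+1 * (1 - epsn v L Lstar M c i.+1)))).

Definition Sigma_mx N : 'M[C]_(N + N) := block_mx 1%:M 0 0 (- 1%:M).
Definition Gamma_mx N : 'M[C]_(N + N) := block_mx 0 1%:M 1%:M 0.

Definition R_mx N (v L Lstar : R) M c : 'M[C]_(N + N) :=
  Sigma_mx N - block_mx (sigma_mx N v L Lstar M c) (sigma_mx N v L Lstar M c)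
                        (sigma_mx N v L Lstar M c) (sigma_mx N v L Lstar M c).

Definition Omega_mx N (v L Lstar : R) M c : 'M[C]_(N + N) :=
  block_mx (rho_mx N v L Lstar M c) (xi_mx N v L Lstar M c)
           (xi_mx N v L Lstar M c) (rho_mx N v L Lstar M c).

Definition D_mx N (v L Lstar : R) M c : 'M[C]_(N + N) :=
  invmx (R_mx N v L Lstar M c) *m Omega_mx N v L Lstar M c.

Definition normal_mode_transformation N (v L Lstar : R) M c (T : 'M[C]_(N + N)) : Prop :=
  [/\ mxH T *m R_mx N v L Lstar M c *m T = Sigma_mx N,
      T = Gamma_mx N *m mxconj T *m Gamma_mx N &
      exists mu : 'I_N -> R, (forall i, 0 < mu i) /\
        invmx T *m D_mx N v L Lstar M c *m T
        = diag_mx (row_mx (\row_(i < N) toC (mu i)) (\row_(i < N) toC (- mu i)))].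

End Model.
Arguments normal_mode_transformation {R} N v L Lstar M c T.

(* Main.v *)
Require Import Defs.
From HB Require Import structures.
From mathcomp Require Import all_boot all_order all_algebra.
From mathcomp Require Import reals trigo.
From mathcomp Require Import complex.
From mathcomp Require Import sesquilinear spectral zify lra.
Import Order.TTheory GRing.Theory Num.Theory.
Local Open Scope ring_scope.

Section Gen.
Variable R : realType.
Local Notation C := (R[i]).

Lemma conjcE (x : C) : conjc x = Num.conj x. Proof. by []. Qed.

Lemma mxconjK m n (A : 'M[C]_(m, n)) : mxconj (mxconj A) = A.
Proof. by apply/matrixP=> i j; rewrite !mxE conjcK. Qed.

Lemma mxconjM m n p (A : 'M[C]_(m, n)) (B : 'M[C]_(n, p)) :
  mxconj (A *m B) = mxconj A *m mxconj B.
Proof. by rewrite /mxconj map_mxM. Qed.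

Lemma mxconjD m n (A B : 'M[C]_(m, n)) : mxconj (A + B) = mxconj A + mxconj B.
Proof. by rewrite /mxconj map_mxD. Qed.

Lemma mxconjN m n (A : 'M[C]_(m, n)) : mxconj (- A) = - mxconj A.
Proof. by rewrite /mxconj map_mxN. Qed.

Lemma mxconj0 m n : mxconj (0 : 'M[C]_(m, n)) = 0.
Proof. by apply/matrixP=> i j; rewrite !mxE conjc0. Qed.

Lemma mxconj_scalar n (a : C) : mxconj (a%:M : 'M_n) = (conjc a)%:M.
Proof. by apply/matrixP=> i j; rewrite !mxE; case: (i == j); rewrite ?mulr1n ?mulr0n ?conjc0. Qed.

Lemma mxconj1 n : mxconj (1%:M : 'M[C]_n) = 1%:M.
Proof. by rewrite mxconj_scalar conjc1. Qed.

Lemma mxconj_row m n1 n2 (A : 'M[C]_(m, n1)) (B : 'M[C]_(m, n2)) :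
  mxconj (row_mx A B) = row_mx (mxconj A) (mxconj B).
Proof. by rewrite /mxconj map_row_mx. Qed.

Lemma mxconj_block m1 m2 n1 n2 (A : 'M[C]_(m1, n1)) (B : 'M[C]_(m1, n2))
  (Cc : 'M[C]_(m2, n1)) (D : 'M[C]_(m2, n2)) :
  mxconj (block_mx A B Cc D) = block_mx (mxconj A) (mxconj B) (mxconj Cc) (mxconj D).
Proof. by rewrite /mxconj map_block_mx. Qed.

Lemma mxconj_diag n (d : 'rV[C]_n) : mxconj (diag_mx d) = diag_mx (mxconj d).
Proof. by apply/matrixP=> i j; rewrite !mxE; case: (i == j); rewrite ?mulr1n ?mulr0n ?conjc0. Qed.

Lemma mxH_mul m n p (A : 'M[C]_(m, n)) (B : 'M[C]_(n, p)) :
  mxH (A *m B) = mxH B *m mxH A.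
Proof. by rewrite /mxH mxconjM trmx_mul. Qed.

Lemma mxHK m n (A : 'M[C]_(m, n)) : mxH (mxH A) = A.
Proof. by apply/matrixP=> i j; rewrite !mxE conjcK. Qed.

Lemma mxHD m n (A B : 'M[C]_(m, n)) : mxH (A + B) = mxH A + mxH B.
Proof. by rewrite /mxH mxconjD linearD. Qed.

Lemma mxHN m n (A : 'M[C]_(m, n)) : mxH (- A) = - mxH A.
Proof. by rewrite /mxH mxconjN linearN. Qed.

Lemma mxH0 m n : mxH (0 : 'M[C]_(m, n)) = 0.
Proof. by rewrite /mxH mxconj0 trmx0. Qed.

Lemma mxH1 n : mxH (1%:M : 'M[C]_n) = 1%:M.
Proof. by rewrite /mxH mxconj1 trmx1. Qed.

Lemma mxH_conj m n (A : 'M[C]_(m, n)) : mxH (mxconj A) = A^T.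
Proof. by rewrite /mxH mxconjK. Qed.

Lemma mxconj_H m n (A : 'M[C]_(m, n)) : mxconj (mxH A) = A^T.
Proof. by apply/matrixP=> i j; rewrite !mxE conjcK. Qed.

Lemma mxH_row m n1 n2 (A : 'M[C]_(m, n1)) (B : 'M[C]_(m, n2)) :
  mxH (row_mx A B) = col_mx (mxH A) (mxH B).
Proof. by rewrite /mxH mxconj_row tr_row_mx. Qed.

Lemma mxH_block m1 m2 n1 n2 (A : 'M[C]_(m1, n1)) (B : 'M[C]_(m1, n2))
  (Cc : 'M[C]_(m2, n1)) (D : 'M[C]_(m2, n2)) :
  mxH (block_mx A B Cc D) = block_mx (mxH A) (mxH Cc) (mxH B) (mxH D).
Proof. by rewrite /mxH mxconj_block tr_block_mx. Qed.

Lemma mxH_diag n (d : 'rV[C]_n) : mxH (diag_mx d) = diag_mx (mxconj d).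
Proof. by rewrite /mxH mxconj_diag tr_diag_mx. Qed.

Lemma Gamma_sq N : Gamma_mx R N *m Gamma_mx R N = 1%:M.
Proof.
rewrite /Gamma_mx mulmx_block !mulmx0 !mul0mx !mulmx1 !addr0 !add0r.
by rewrite -scalar_mx_block.
Qed.

Lemma Gamma_conj N : mxconj (Gamma_mx R N) = Gamma_mx R N.
Proof. by rewrite /Gamma_mx mxconj_block mxconj0 mxconj1. Qed.

Lemma Gamma_H N : mxH (Gamma_mx R N) = Gamma_mx R N.
Proof. by rewrite /Gamma_mx mxH_block mxH0 mxH1. Qed.

Lemma row_Gamma m N (A B : 'M[C]_(m, N)) :
  row_mx A B *m Gamma_mx R N = row_mx B A.
Proof.
by rewrite /Gamma_mx mul_row_block !mulmx0 !mulmx1 addr0 add0r.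
Qed.

Lemma Gamma_diag N (a : 'rV[C]_N) :
  Gamma_mx R N *m diag_mx (row_mx a a) = diag_mx (row_mx a a) *m Gamma_mx R N.
Proof.
rewrite /Gamma_mx diag_mx_row !mulmx_block !mulmx0 !mul0mx !mulmx1 !mul1mx.
by rewrite !addr0 !add0r.
Qed.


Lemma Gamma_tr N : (Gamma_mx R N)^T = Gamma_mx R N.
Proof. by rewrite /Gamma_mx tr_block_mx !trmx0 trmx1. Qed.

Lemma mxconj_tr m n (A : 'M[C]_(m, n)) : mxconj (A^T) = mxH A.
Proof. by apply/matrixP=> i j; rewrite !mxE. Qed.

Lemma sel_r m n p (B : 'M[C]_(m, n)) (f : 'I_p -> 'I_n) i k :
  (B *m \matrix_(j < n, k < p) ((j == f k)%:R : C)) i k = B i (f k).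
Proof.
rewrite !mxE (bigD1 (f k)) //= big1 => [|j /negbTE hj]; rewrite !mxE ?eqxx ?hj.
  by rewrite mulr1 addr0.
by rewrite mulr0.
Qed.

Lemma sel_l m n p (B : 'M[C]_(n, m)) (f : 'I_p -> 'I_n) a b :
  ((\matrix_(j < n, k < p) ((j == f k)%:R : C))^T *m B) a b = B (f a) b.
Proof.
rewrite !mxE (bigD1 (f a)) //= big1 => [|j /negbTE hj]; rewrite !mxE ?eqxx ?hj.
  by rewrite mul1r addr0.
by rewrite mul0r.
Qed.

Lemma tC_mxH m n (A : 'M[C]_(m, n)) : map_mx (@Num.conj C) (A^T) = mxH A.
Proof. by apply/matrixP=> i j; rewrite !mxE. Qed.

End Gen.

Section Core.
Variable R : realType.
Local Notation C := (R[i]).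
Lemma core_spectral N (K : 'M[C]_(N + N)) :
  mxH K = K -> K \in unitmx ->
  Gamma_mx R N *m mxconj K *m Gamma_mx R N = - K ->
  exists (U2 : 'M[C]_(N + N)) (s : 'rV[C]_N),
    [/\ (forall k, 0 < s 0 k), mxH U2 *m U2 = 1%:M,
        K *m U2 = U2 *m diag_mx (row_mx s (- s)) &
        Gamma_mx R N *m mxconj U2 *m Gamma_mx R N = U2].
Proof.
move=> hK Ku hG.
have Kh : K \is hermsymmx.
  apply/is_hermitianmxP; rewrite expr0 scale1r tC_mxH.
  by rewrite hK.
have /orthomx_spectralP Keq := hermitian_normalmx Kh.
have lreal := hermitian_spectral_diag_real Kh.
have Uu := spectral_unitarymx K.
set U := spectralmx K in Keq Uu.
set lam := spectral_diag K in Keq lreal.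
clearbody U lam.
have UUh : U *m mxH U = 1%:M.
  by move/unitarymxP: Uu; rewrite tC_mxH.
have UhU : mxH U *m U = 1%:M := mulmx1C UUh.
have Keq' : K = mxH U *m diag_mx lam *m U.
  by rewrite [LHS]Keq (invmx_unitary Uu) tC_mxH.
clear Keq Kh.
have lre : forall j, lam 0 j \is Num.real by move=> j; move/mxOverP: lreal; apply.
have lcj : forall j, conjc (lam 0 j) = lam 0 j by move=> j; apply/CrealP.
have lamc : mxconj lam = lam by apply/rowP=> j; rewrite !mxE lcj.
have UK : U *m K = diag_mx lam *m U.
  by rewrite Keq' !mulmxA UUh mul1mx.
have KUh : K *m mxH U = mxH U *m diag_mx lam.
  by rewrite Keq' -!mulmxA UUh mulmx1.
have lam_nz : forall j, lam 0 j != 0.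
  move=> j; apply/negP => /eqP l0.
  have hrow : row j U *m K = 0.
    apply/rowP => k; rewrite -row_mul UK mul_diag_mx !mxE l0 mul0r.
    done.
  have hU : row j U = 0.
    by have := congr1 (mulmx^~ (invmx K)) hrow; rewrite mulmxK // mul0mx.
  have := congr1 (fun M : 'M[C]_(N + N) => M j j) UUh; rewrite !mxE eqxx big1 => [|k _].
    by move/eqP; rewrite eq_sym oner_eq0.
  by have := congr1 (fun M : 'rV[C]_(N + N) => M 0 k) hU; rewrite !mxE => ->; rewrite mul0r.
have [Mm eMm] : exists Mm, Mm = U *m Gamma_mx R N *m U^T by eexists.
have MmT : Mm^T = Mm by rewrite eMm !trmx_mul trmxK Gamma_tr mulmxA.
have Mmc : mxconj Mm = mxconj U *m Gamma_mx R N *m mxH U.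
  by rewrite eMm !mxconjM Gamma_conj mxconj_tr.
have UtUc : U^T *m mxconj U = 1%:M.
  by rewrite -mxconj_H -mxconjM UhU mxconj1.
have MMc : Mm *m mxconj Mm = 1%:M.
  rewrite Mmc eMm !mulmxA -[U *m _ *m _ *m _]mulmxA UtUc mulmx1.
  by rewrite -[U *m _ *m _]mulmxA Gamma_sq mulmx1 UUh.
have McM : mxconj Mm *m Mm = 1%:M := mulmx1C MMc.
have Kc : mxconj K = U^T *m diag_mx lam *m mxconj U.
  by rewrite {1}Keq' !mxconjM mxconj_H mxconj_diag lamc.
have e1 : U *m K *m mxH U = diag_mx lam by rewrite UK -mulmxA UUh mulmx1.
have e2 : U *m (Gamma_mx R N *m mxconj K *m Gamma_mx R N) *m mxH U
    = Mm *m diag_mx lam *m mxconj Mm.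
  rewrite Kc. rewrite Mmc. rewrite eMm. rewrite !mulmxA. reflexivity.
have MDM : Mm *m diag_mx lam *m mxconj Mm = - diag_mx lam.
  by rewrite -e2 hG mulmxN mulNmx e1.
have MD : Mm *m diag_mx lam = - (diag_mx lam *m Mm).
  rewrite -[Mm *m _]mulmx1. rewrite -McM. rewrite !mulmxA. rewrite MDM. rewrite mulNmx. done.
have Mm0 : forall j k, (0 < lam 0 j) = (0 < lam 0 k) -> Mm j k = 0.
  move=> j k hjk.
  have := congr1 (fun X : 'M[C]_(N + N) => X j k) MD; rewrite mul_mx_diag mul_diag_mx !mxE.
  move/eqP; rewrite -addr_eq0 [lam 0 j * _]mulrC -mulrDr mulf_eq0 => /orP[/eqP //|].
  move=> hs; exfalso; move: hs; apply/negP.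
  have [hj|hj] := boolP (0 < lam 0 j).
    have hk : 0 < lam 0 k by rewrite -hjk.
    by rewrite gt_eqF // addr_gt0.
  have hjn : lam 0 j < 0.
    by move: (lam_nz j) hj; rewrite (real_neqr_lt (lre j) (real0 _)) => /orP[|->].
  have hkn : lam 0 k < 0.
    move: (lam_nz k); rewrite hjk in hj.
    by rewrite (real_neqr_lt (lre k) (real0 _)) (negbTE hj) orbF.
  by rewrite lt_eqF // -oppr_gt0 opprD addr_gt0 // oppr_gt0.
set A := [set j | 0 < lam 0 j].
pose q j k := Mm j k * conjc (Mm j k).
have MmS : forall j k, Mm j k = Mm k j.
  by move=> j k; rewrite -{1}MmT mxE.
have qsym : forall j k, q j k = q k j.
  by move=> j k; rewrite /q MmS.
have qrow : forall j, \sum_k q j k = 1.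
  move=> j; have := congr1 (fun X : 'M[C]_(N + N) => X j j) MMc; rewrite !mxE eqxx /= => h.
  apply: (etrans _ h).
  by apply: eq_bigr => k _; rewrite /q !mxE (MmS k j).
have qz : forall j k, (j \in A) = (k \in A) -> q j k = 0.
  by move=> j k; rewrite !inE => /Mm0 h; rewrite /q h mul0r.
have cardA : (#|A|%:R : C) = #|~: A|%:R.
  rewrite -!sumr_const.
  transitivity (\sum_(j in A) \sum_(k in ~: A) q j k).
    apply: eq_bigr => j jA; rewrite -(qrow j) [LHS](bigID (mem A)) /= big1 ?add0r.
      by apply: eq_bigl => k; rewrite in_setC.
    by move=> k kA; apply: qz; rewrite jA.
  rewrite exchange_big /=; apply: eq_bigr => k kA.
  rewrite -(qrow k) [RHS](bigID (mem A)) /= [X in _ = _ + X]big1 ?addr0.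
    by apply: eq_bigr => j _; rewrite qsym.
  by move=> j jA; apply: qz; move: kA; rewrite in_setC => /negbTE ->; rewrite (negbTE jA).
have hA : #|A| = N.
  move/eqP: cardA; rewrite eqr_nat => /eqP h.
  have := cardsC A; rewrite card_ord -h; lia.
pose f (k : 'I_N) : 'I_(N + N) := enum_val (cast_ord (esym hA) k).
have hf_in : forall k, 0 < lam 0 (f k).
  by move=> k; have := enum_valP (cast_ord (esym hA) k); rewrite inE.
have f_inj : injective f.
  by move=> a b /enum_val_inj /cast_ord_inj.
pose Sel := \matrix_(j < N + N, k < N) ((j == f k)%:R : C).
have SelC : mxconj Sel = Sel.
  by apply/matrixP => i j; rewrite !mxE rmorph_nat.
have SelH : mxH Sel = Sel^T by rewrite /mxH SelC.
have SelTSel : Sel^T *m Sel = 1%:M.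
  by apply/matrixP => a b; rewrite /Sel sel_l !mxE (inj_eq f_inj).
pose s := \row_k lam 0 (f k).
have DSel : diag_mx lam *m Sel = Sel *m diag_mx s.
  apply/matrixP => j k; rewrite mul_diag_mx mul_mx_diag !mxE.
  by case: eqP => [->|_]; rewrite ?mulr1 ?mul1r ?mulr0 ?mul0r.
pose Vp := mxH U *m Sel.
have KV : K *m Vp = Vp *m diag_mx s.
  by rewrite /Vp mulmxA KUh -mulmxA DSel mulmxA.
have VV : mxH Vp *m Vp = 1%:M.
  rewrite /Vp mxH_mul mxHK SelH !mulmxA -[Sel^T *m U *m mxH U]mulmxA UUh mulmx1.
  exact: SelTSel.
have VGV : mxH Vp *m Gamma_mx R N *m mxconj Vp = 0.
  have -> : mxH Vp *m Gamma_mx R N *m mxconj Vp = Sel^T *m (Mm *m Sel).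
    by rewrite /Vp mxH_mul mxHK SelH mxconjM mxconj_H SelC eMm !mulmxA.
  apply/matrixP => a b; rewrite /Sel sel_l sel_r mxE.
  by apply: Mm0; rewrite !hf_in.
have sC : mxconj (diag_mx s) = diag_mx s.
  by rewrite mxconj_diag; congr diag_mx; apply/rowP => k; rewrite !mxE lcj.
have KG : K *m Gamma_mx R N = - (Gamma_mx R N *m mxconj K).
  have := congr1 (mulmx^~ (Gamma_mx R N)) hG.
  rewrite -mulmxA Gamma_sq mulmx1 mulNmx => ->.
  by rewrite opprK.
exists (row_mx Vp (Gamma_mx R N *m mxconj Vp)), s; split.
- by move=> k; rewrite mxE; apply: hf_in.
- rewrite mxH_row mul_col_row VV mulmxA VGV mxH_mul mxH_conj Gamma_H.
  have -> : Vp^T *m Gamma_mx R N *m Vp = 0.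
    by rewrite -mxconj_H -[Vp in _ *m Vp]mxconjK -Gamma_conj -!mxconjM VGV mxconj0.
  have -> : Vp^T *m Gamma_mx R N *m (Gamma_mx R N *m mxconj Vp) = 1%:M.
    by rewrite -mulmxA (mulmxA (Gamma_mx R N)) Gamma_sq mul1mx -mxconj_H -mxconjM VV mxconj1.
  by rewrite -scalar_mx_block.
- rewrite mul_mx_row diag_mx_row mul_row_block !mulmx0 addr0 add0r KV.
  congr row_mx.
  rewrite mulmxA KG mulNmx -[Gamma_mx R N *m _ *m mxconj Vp]mulmxA -mxconjM KV mxconjM sC.
  have -> : diag_mx (- s) = - diag_mx s.
    by apply/matrixP => i j; rewrite !mxE mulNrn.
  by rewrite mulmxN !mulmxA.
- rewrite mxconj_row mxconjM Gamma_conj mxconjK mul_mx_row mulmxA Gamma_sq mul1mx.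
  by rewrite row_Gamma.
Qed.
End Core.

Section Core.
Variable R : realType.
Local Notation C := (R[i]).
Lemma rowsplit_eq N (x y : 'rV[C]_(N + N)) :
  (forall j, x 0 (lshift N j) = y 0 (lshift N j)) ->
  (forall j, x 0 (rshift N j) = y 0 (rshift N j)) -> x = y.
Proof. by move=> hl hr; apply/rowP => k; case: (split_ordP k) => j ->; [apply: hl | apply: hr]. Qed.

Lemma split_l m n (j : 'I_m) : split (lshift n j) = inl j.
Proof. exact: (unsplitK (inl _ j)). Qed.

Lemma split_r m n (j : 'I_n) : split (rshift m j) = inr j.
Proof. exact: (unsplitK (inr _ j)). Qed.

Lemma toC_pos (z : C) : 0 < z -> toC (complex.Re z) = z /\ 0 < complex.Re z.
Proof.
case: z => x y; rewrite ltcE /= => /andP[/eqP -> hx]; split => //.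
Qed.

Lemma toCN (x : R) : toC (- x) = - toC x.
Proof. by rewrite /toC; congr Complex; rewrite oppr0. Qed.

Lemma Sigma_diag N : Sigma_mx R N = diag_mx (row_mx (const_mx 1) (const_mx (-1))).
Proof.
rewrite /Sigma_mx diag_mx_row !diag_const_mx; congr block_mx.
by apply/matrixP => i j; rewrite !mxE mulNrn.
Qed.

Lemma inv_sqrt_prop (x : C) : 0 < x ->
  let r := (sqrtC x)^-1 in [/\ 0 < r, conjc r = r & r * x * r = 1].
Proof.
move=> hx r; have hr : 0 < r by rewrite /r invr_gt0 sqrtC_gt0.
split => //; first exact: (geC0_conj (ltW hr)).
have hs : sqrtC x != 0 by rewrite gt_eqF // sqrtC_gt0.
by rewrite /r -{2}(sqrtCK x) expr2 mulrA mulVf // mul1r divff.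
Qed.

Lemma assemble N (Rm Om : 'M[C]_(N + N)) (a : 'rV[C]_N) :
  (forall k, 0 < a 0 k) -> Om = diag_mx (row_mx a a) ->
  mxH Rm = Rm -> Rm \in unitmx ->
  Gamma_mx R N *m mxconj Rm *m Gamma_mx R N = - Rm ->
  exists T : 'M[C]_(N + N),
    [/\ mxH T *m Rm *m T = Sigma_mx R N,
        T = Gamma_mx R N *m mxconj T *m Gamma_mx R N &
        exists mu : 'I_N -> R, (forall i, 0 < mu i) /\
          invmx T *m (invmx Rm *m Om) *m T
          = diag_mx (row_mx (\row_(i < N) toC (mu i)) (\row_(i < N) toC (- mu i)))].
Proof.
move=> apos -> hRH Ru hRG.
pose p := \row_k (sqrtC (a 0 k))^-1.
have pprop : forall k, [/\ 0 < p 0 k, conjc (p 0 k) = p 0 k & p 0 k * a 0 k * p 0 k = 1].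
  by move=> k; rewrite mxE; apply: inv_sqrt_prop.
pose P := diag_mx (row_mx p p).
have pc : mxconj p = p by apply/rowP => k; rewrite mxE; case: (pprop k).
have PC : mxconj P = P by rewrite /P mxconj_diag mxconj_row pc.
have PH : mxH P = P by rewrite /P mxH_diag mxconj_row pc.
have PG : Gamma_mx R N *m P = P *m Gamma_mx R N by rewrite /P Gamma_diag.
have POP : P *m diag_mx (row_mx a a) *m P = 1%:M.
  rewrite /P !mulmx_diag -(diag_const_mx (N + N) (1 : C)); congr diag_mx.
  apply: rowsplit_eq => j; rewrite !mxE ?split_l ?split_r /=;
    by case: (pprop j).
have Pu : P \in unitmx by case: (mulmx1_unit POP).
clearbody P.
have [K eK] : exists K, K = P *m Rm *m P by eexists.
have KH : mxH K = K by rewrite eK !mxH_mul PH hRH mulmxA.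
have Ku : K \in unitmx by rewrite eK !unitmx_mul Pu Ru.
have KG : Gamma_mx R N *m mxconj K *m Gamma_mx R N = - K.
  have -> : Gamma_mx R N *m mxconj K *m Gamma_mx R N
      = P *m (Gamma_mx R N *m mxconj Rm *m Gamma_mx R N) *m P.
    by rewrite eK !mxconjM PC !mulmxA PG -!mulmxA PG.
  by rewrite hRG mulmxN mulNmx eK.
have [U2 [s [spos U2U KU2 U2G]]] := @core_spectral R N K KH Ku KG.
pose g := \row_k (sqrtC (s 0 k))^-1.
have gprop : forall k, [/\ 0 < g 0 k, conjc (g 0 k) = g 0 k & g 0 k * s 0 k * g 0 k = 1].
  by move=> k; rewrite mxE; apply: inv_sqrt_prop.
clearbody g.
pose G := diag_mx (row_mx g g).
have gc : mxconj g = g by apply/rowP => k; rewrite mxE; case: (gprop k).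
have GC : mxconj G = G by rewrite /G mxconj_diag mxconj_row gc.
have GH : mxH G = G by rewrite /G mxH_diag mxconj_row gc.
have GG : G *m Gamma_mx R N = Gamma_mx R N *m G by rewrite /G Gamma_diag.
have GSG : G *m diag_mx (row_mx s (- s)) *m G = Sigma_mx R N.
  rewrite /G Sigma_diag !mulmx_diag; congr diag_mx.
  apply: rowsplit_eq => j; rewrite !mxE ?split_l ?split_r /= ?mxE; case: (gprop j) => _ _ h.
    exact: h.
  by rewrite mulrN mulNr h.
pose m := \row_k (s 0 k)^-1.
have SGL : diag_mx (row_mx s (- s)) *m G *m diag_mx (row_mx m (- m)) = G.
  rewrite /G !mulmx_diag; congr diag_mx.
  apply: rowsplit_eq => j; rewrite !mxE ?split_l ?split_r /=.
    have hs : s 0 j != 0 by rewrite gt_eqF.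
    by rewrite /m mxE mulrAC divff // mul1r.
  have hs : s 0 j != 0 by rewrite gt_eqF.
  by rewrite /m !mxE !mulrN !mulNr opprK mulrAC divff // mul1r.
clearbody G.
have mpos : forall k, 0 < m 0 k by move=> k; rewrite mxE invr_gt0.
clearbody m.
have Gu : G \in unitmx.
  have h := GSG; have : Sigma_mx R N \in unitmx.
    have SS : Sigma_mx R N *m Sigma_mx R N = 1%:M.
      rewrite /Sigma_mx mulmx_block !mulmx0 !mul0mx !addr0 !add0r mulmx1 mulNmx mulmxN opprK mulmx1.
      by rewrite -scalar_mx_block.
    by case: (mulmx1_unit SS).
  by rewrite -h !unitmx_mul => /andP[/andP[]].
exists (P *m U2 *m G); split.
- rewrite !mxH_mul PH GH !mulmxA -(mulmxA _ P Rm) -(mulmxA _ _ P) -eK.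
  by rewrite -(mulmxA _ K U2) KU2 (mulmxA _ U2) -(mulmxA G) U2U mulmx1 GSG.
- rewrite !mxconjM PC GC.
  have -> : Gamma_mx R N *m (P *m mxconj U2 *m G) *m Gamma_mx R N
      = P *m (Gamma_mx R N *m mxconj U2 *m Gamma_mx R N) *m G.
    by rewrite !mulmxA PG -!mulmxA GG.
  by rewrite U2G.
exists (fun k => complex.Re (m 0 k)).
split; first by move=> k; case: (toC_pos _ (mpos k)).
have -> : row_mx (\row_(i < N) toC (complex.Re (m 0 i))) (\row_(i < N) toC (- complex.Re (m 0 i)))
    = row_mx m (- m).
  by congr row_mx; apply/rowP => k; rewrite !mxE ?toCN; case: (toC_pos _ (mpos k)) => ->.
set T := P *m U2 *m G.
have Tu : T \in unitmx by rewrite /T !unitmx_mul Pu Gu andbT; case: (mulmx1_unit U2U).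
have eOT : diag_mx (row_mx a a) *m T = Rm *m T *m diag_mx (row_mx m (- m)).
  apply: (can_inj (mulKmx Pu)).
  rewrite /T !mulmxA POP mul1mx.
  by rewrite -eK KU2 -!mulmxA (mulmxA (diag_mx _) G) SGL.
clearbody T.
rewrite -mulmxA -(mulmxA (invmx Rm)) eOT -!mulmxA (mulKmx Ru).
by rewrite (mulKmx Tu).
Qed.
End Core.
Section Core.
Variable R : realType.
Local Notation C := (R[i]).
Lemma conj_toC (x : R) : conjc (toC x) = toC x.
Proof. by rewrite /toC /= oppr0. Qed.

Lemma quad_diag n (y : 'cV[C]_n) (d : 'rV[C]_n) :
  (forall i, 0 < d 0 i) -> y != 0 -> 0 < (mxH y *m diag_mx d *m y) 0 0.
Proof.
move=> dpos ynz.
have [i0 hi0] : exists i, y i 0 != 0.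
  case/boolP: [exists i, y i 0 != 0] => [/existsP [i hi] | /existsPn h]; first by exists i.
  exfalso; move/negP: ynz; apply; apply/eqP/matrixP => i j.
  by rewrite ord1 !mxE; move: (h i); rewrite negbK => /eqP.
have term : forall i, (mxH y *m diag_mx d) 0 i * y i 0 = d 0 i * (y i 0 * conjc (y i 0)).
  by move=> i; rewrite mul_mx_diag !mxE [conjc _ * _]mulrC -mulrA [conjc _ * _]mulrC.
rewrite mxE (bigD1 i0) //= term.
have h1 : 0 < d 0 i0 * (y i0 0 * conjc (y i0 0)).
  by rewrite mulr_gt0 // mul_conjC_gt0.
rewrite (lt_le_trans h1) // lerDl; apply: sumr_ge0 => i _; rewrite term.
by rewrite mulr_ge0 ?mul_conjC_ge0 // ltW.
Qed.

Lemma forward N (Rm Om T : 'M[C]_(N + N)) (mu : 'I_N -> R) :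
  Rm \in unitmx -> mxH T *m Rm *m T = Sigma_mx R N ->
  (forall i, 0 < mu i) ->
  invmx T *m (invmx Rm *m Om) *m T
    = diag_mx (row_mx (\row_(i < N) toC (mu i)) (\row_(i < N) toC (- mu i))) ->
  posdef Om.
Proof.
move=> Ru hT mupos hD.
have SS : Sigma_mx R N *m Sigma_mx R N = 1%:M.
  rewrite /Sigma_mx mulmx_block !mulmx0 !mul0mx !addr0 !add0r mulmx1 mulNmx mulmxN opprK mulmx1.
  by rewrite -scalar_mx_block.
have Su : Sigma_mx R N \in unitmx by case: (mulmx1_unit SS).
have Tu : T \in unitmx by move: Su; rewrite -hT !unitmx_mul => /andP[].
set Lam := diag_mx _ in hD.
pose mm := \row_(i < N) toC (mu i).
have SL : Sigma_mx R N *m Lam = diag_mx (row_mx mm mm).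
  rewrite /Lam Sigma_diag mulmx_diag; congr diag_mx.
  apply: rowsplit_eq => j; rewrite !mxE ?split_l ?split_r /= ?mxE ?mul1r //.
  by rewrite toCN mulN1r opprK.
have OT : Om *m T = Rm *m (T *m Lam).
  by rewrite -hD -!mulmxA (mulKVmx Tu) (mulKVmx Ru).
have TOT : mxH T *m Om *m T = diag_mx (row_mx mm mm).
  by rewrite -mulmxA OT !mulmxA hT SL.
have hS : mxH (invmx T) *m mxH T = 1%:M by rewrite -mxH_mul (mulmxV Tu) mxH1.
have Oeq : Om = mxH (invmx T) *m diag_mx (row_mx mm mm) *m invmx T.
  by rewrite -TOT !mulmxA hS mul1mx -mulmxA (mulmxV Tu) mulmx1.
have mmc : mxconj (row_mx mm mm) = row_mx mm mm.
  by rewrite mxconj_row; congr row_mx; apply/rowP => i; rewrite !mxE conj_toC.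
have mmpos : forall i, 0 < (row_mx mm mm) 0 i.
  move=> i; case: (split_ordP i) => j ->; rewrite ?row_mxEl ?row_mxEr mxE ltcE /=;
  by rewrite eqxx mupos.
clearbody mm.
split.
  by rewrite Oeq !mxH_mul mxHK mxH_diag mmc mulmxA.
move=> x xnz; rewrite Oeq.
have -> : mxH x *m (mxH (invmx T) *m diag_mx (row_mx mm mm) *m invmx T) *m x
    = mxH (invmx T *m x) *m diag_mx (row_mx mm mm) *m (invmx T *m x).
  by rewrite mxH_mul !mulmxA.
apply: quad_diag => //.
apply: contra xnz => /eqP hy.
by rewrite -(mulKVmx Tu x) hy mulmx0.
Qed.
End Core.
Section Core.
Variable R : realType.
Local Notation C := (R[i]).
Lemma toCE (x : R) : toC x = (x%:C)%C. Proof. by []. Qed.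

Lemma conj_itoC (x : R) : conjc ('i * toC x) = - ('i * toC x).
Proof.
have h : Num.conj ('i * toC x) = Num.conj ('i : C) * Num.conj (toC x).
  exact: rmorphM.
rewrite conjcE h conjCi.
have -> : Num.conj (toC x) = toC x := conj_toC _ x.
by rewrite mulNr.
Qed.

Lemma sigma_conj N (v L Lstar : R) M (c : nat -> R) :
  mxconj (sigma_mx N v L Lstar M c) = - sigma_mx N v L Lstar M c.
Proof.
apply/matrixP => i j; rewrite !mxE; case: (i == j).
  by rewrite conjc0 oppr0.
exact: conj_itoC.
Qed.

Lemma sigma_tr N (v L Lstar : R) M (c : nat -> R) :
  (sigma_mx N v L Lstar M c)^T = - sigma_mx N v L Lstar M c.
Proof.
apply/matrixP => i j; rewrite !mxE.
case: eqP => [hji|hji]; case: eqP => [hij|hij] //=.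
- by rewrite oppr0.
- by exfalso; apply: hij.
- by exfalso; apply: hji.
rewrite -mulrN -toCN; congr (_ * toC _).
rewrite mulnC addnC [un _ _ _ _ _ j.+1 * _]mulrC.
by rewrite -[((i.+1 ^ 2)%:R - _)]opprB mulrN invrN mulrN.
Qed.

Lemma sigma_H N (v L Lstar : R) M (c : nat -> R) :
  mxH (sigma_mx N v L Lstar M c) = sigma_mx N v L Lstar M c.
Proof. by rewrite /mxH sigma_conj linearN /= sigma_tr opprK. Qed.

Lemma Sigma_conj N : mxconj (Sigma_mx R N) = Sigma_mx R N.
Proof. by rewrite /Sigma_mx mxconj_block mxconj0 mxconjN mxconj1. Qed.

Lemma Sigma_H N : mxH (Sigma_mx R N) = Sigma_mx R N.
Proof. by rewrite /Sigma_mx mxH_block mxH0 mxHN mxH1. Qed.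

Lemma R_H N (v L Lstar : R) M (c : nat -> R) : mxH (R_mx N v L Lstar M c) = R_mx N v L Lstar M c.
Proof. by rewrite /R_mx mxHD mxHN Sigma_H mxH_block sigma_H. Qed.

Lemma Gamma_block N (A B Cc D : 'M[C]_N) :
  Gamma_mx R N *m block_mx A B Cc D *m Gamma_mx R N = block_mx D Cc B A.
Proof.
by rewrite /Gamma_mx !mulmx_block !mulmx0 !mul0mx !mulmx1 !mul1mx !addr0 !add0r.
Qed.

Lemma R_Gamma_gen N (S : 'M[C]_N) : mxconj S = - S ->
  Gamma_mx R N *m mxconj (Sigma_mx R N - block_mx S S S S) *m Gamma_mx R N
  = - (Sigma_mx R N - block_mx S S S S).
Proof.
move=> hS.
rewrite mxconjD mxconjN Sigma_conj mxconj_block hS.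
rewrite mulmxDr mulmxDl mulmxN mulNmx /Sigma_mx !Gamma_block.
rewrite !opp_block_mx !add_block_mx !opp_block_mx.
congr block_mx.
- by rewrite !opprK opprB addrC.
- by rewrite opprK add0r sub0r opprK.
- by rewrite opprK add0r sub0r opprK.
- by rewrite opprB !opprK addrC.
Qed.

Lemma R_Gamma N (v L Lstar : R) M (c : nat -> R) :
  Gamma_mx R N *m mxconj (R_mx N v L Lstar M c) *m Gamma_mx R N = - R_mx N v L Lstar M c.
Proof. exact: R_Gamma_gen (sigma_conj N v L Lstar M c). Qed.

End Core.

Section Core.
Variable R : realType.
Local Notation C := (R[i]).
Lemma kn_pos (L : R) (n : nat) : 0 < L -> (0 < n)%N -> 0 < kn L n.
Proof. by move=> hL hn; rewrite /kn divr_gt0 // mulr_gt0 ?ltr0n // pi_gt0. Qed.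

Lemma un_ge0 (v L Lstar : R) M (c : nat -> R) n : 0 < L -> (0 < n)%N ->
  0 <= un v L Lstar M c n.
Proof. by move=> hL hn; rewrite /un divr_ge0 ?sqrtr_ge0 // ltW // kn_pos. Qed.

Lemma un_gt0 (v L Lstar : R) M (c : nat -> R) n : 0 < L -> (0 < n)%N ->
  disc v L Lstar M c n != 0 -> 0 < un v L Lstar M c n.
Proof.
by move=> hL hn hd; rewrite /un divr_gt0 ?kn_pos // sqrtr_gt0 normr_gt0.
Qed.

Lemma quad_delta_mx n (A : 'M[C]_n) i j :
  mxH (delta_mx i 0 : 'cV[C]_n) *m A *m delta_mx j 0 = (A i j)%:M.
Proof.
have -> : mxH (delta_mx i 0 : 'cV[C]_n) = (delta_mx 0 i : 'rV[C]_n).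
  by apply/matrixP => a b; rewrite !mxE rmorph_nat andbC.
apply/matrixP => a b; rewrite !ord1 -rowE -colE !mxE.
by rewrite eqxx mulr1n.
Qed.

Lemma quad2 n (A : 'M[C]_n) i j :
  (mxH (delta_mx i 0 + delta_mx j 0 : 'cV[C]_n) *m A *m (delta_mx i 0 + delta_mx j 0 : 'cV[C]_n)) 0 0
  = A i i + A i j + A j i + A j j.
Proof.
rewrite mxHD !mulmxDl !mulmxDr !quad_delta_mx !mxE !eqxx !mulr1n.
by rewrite !addrA.
Qed.

Lemma posdef_disc N (v L Lstar : R) M (c : nat -> R) : 0 < L ->
  posdef (Omega_mx N v L Lstar M c) -> forall k : 'I_N, 0 < disc v L Lstar M c k.+1.
Proof.
move=> hL [_ hq] k; case: (boolP (0 < disc v L Lstar M c k.+1)) => // hneg.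
exfalso.
pose x : 'cV[C]_(N + N) := delta_mx (lshift N k) 0 + delta_mx (rshift N k) 0.
have xnz : x != 0.
  apply/negP => /eqP /matrixP /(_ (lshift N k) 0).
  rewrite !mxE !eqxx /= eq_lrshift /= mulr1n mulr0n addr0 => /eqP.
  by rewrite oner_eq0.
have := hq x xnz; rewrite /x quad2.
rewrite /Omega_mx block_mxEul block_mxEur block_mxEdl block_mxEdr.
rewrite /rho_mx /xi_mx !mxE !eqxx !mulr1n /epsn (negbTE hneg).
rewrite mulr0 subr0 mulr1 !toCE -!raddfD /= -(raddf0 (real_complex R)) ltcR.
have := un_ge0 v L Lstar M c k.+1 hL (ltn0Sn k).
set u := un _ _ _ _ _ _ => hu.
have hk : (0 : R) <= k.+1%:R by rewrite ler0n.
have hd : 0 <= k.+1%:R * u by rewrite mulr_ge0.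
set d := k.+1%:R * u in hd *.
lra.
Qed.

Lemma omega_diag N (v L Lstar : R) M (c : nat -> R) :
  (forall k : 'I_N, 0 < disc v L Lstar M c k.+1) ->
  Omega_mx N v L Lstar M c = diag_mx (row_mx
     (\row_(i < N) toC (i.+1%:R * un v L Lstar M c i.+1 * epsn v L Lstar M c i.+1))
     (\row_(i < N) toC (i.+1%:R * un v L Lstar M c i.+1 * epsn v L Lstar M c i.+1))).
Proof.
move=> hpos; rewrite diag_mx_row /Omega_mx; congr block_mx.
- apply/matrixP => i j; rewrite !mxE /epsn (hpos i) subrr mulr0 oppr0.
  by rewrite toCE raddf0 mul0rn.
- apply/matrixP => i j; rewrite !mxE /epsn (hpos i) subrr mulr0 oppr0.
  by rewrite toCE raddf0 mul0rn.
Qed.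

Lemma omega_pos N (v L Lstar : R) M (c : nat -> R) : 0 < L ->
  (forall k : 'I_N, 0 < disc v L Lstar M c k.+1) ->
  forall k : 'I_N,
  0 < (\row_(i < N) toC (i.+1%:R * un v L Lstar M c i.+1 * epsn v L Lstar M c i.+1)) 0 k.
Proof.
move=> hL hpos k; rewrite mxE /epsn (hpos k) mulr1 toCE -(raddf0 (real_complex R)) ltcR.
by rewrite mulr_gt0 ?ltr0Sn // un_gt0 // gt_eqF.
Qed.

End Core.

Theorem lemma6 (R : realType) (N : nat) (v L Lstar : R) (M : nat) (c : nat -> R)
  (hN : (1 <= N)%N) (hv : `|v| < 1) (hL : 0 < L) (hLs : 0 <= Lstar)
  (hM : (1 <= M)%N) (hc1 : c 1%N = 1)
  (hdisc : forall n : nat, (1 <= n <= N)%N -> disc v L Lstar M c n != 0)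
  (hR : R_mx N v L Lstar M c \in unitmx) :
  (exists T : 'M[R[i]]_(N + N), normal_mode_transformation N v L Lstar M c T)
  <-> posdef (Omega_mx N v L Lstar M c).
Proof.
split.
  move=> [T [h1 h2 [mu [mupos h3]]]].
  exact: (@forward R N (R_mx N v L Lstar M c) (Omega_mx N v L Lstar M c) T mu hR h1 mupos h3).
move=> hpd.
have hpos := @posdef_disc R N v L Lstar M c hL hpd.
have [T [h1 h2 h3]] := @assemble R N (R_mx N v L Lstar M c) (Omega_mx N v L Lstar M c) _
  (@omega_pos R N v L Lstar M c hL hpos) (@omega_diag R N v L Lstar M c hpos)
  (@R_H R N v L Lstar M c) hR (@R_Gamma R N v L Lstar M c).
by exists T; split.
Qed.
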